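(* Let $I$ be a resident-minimal and hospital-complete instance and let $(P,X)$ be a prescription for $I$. Then $|\mathrm{res}\,P\setminus\mathrm{res}\,\mathrm{tent}(I)|\ge|\mathrm{tgs}(P,X)|$.
   Context: An instance $I$ consists of finite disjoint sets $R$ (residents) and $H$ (hospitals), a positive integer quota $q_h$ for each $h\in H$, for each $r\in R$ a preference list of $r$ (a sequence of distinct members of $H$, not necessarily all), and for each $h\in H$ a preference list of $h$ (a sequence of distinct members of $R$). A list is complete if it contains every member of the opposite side; an instance is hospital-complete if every hospital's list is complete. A match is a pair $(r,h)\in R\times H$. For a set $M$ of matches, $\mathrm{res}_h M=\{r:(r,h)\in M\}$, $\mathrm{res}\,M=\{r:(r,h)\in M\text{ for some }h\}$. An event is $(r,h)^+$ (proposal) or $(r,h)^-$ (rejection). For an event sequence $\sigma$, $\mathrm{prop}(\sigma)$, $\mathrm{rej}(\sigma)$ are the sets of matches proposed/rejected in $\sigma$ and $\mathrm{tent}(\sigma)=\mathrm{prop}(\sigma)\setminus\mathrm{rej}(\sigma)$. A match $(r,h)\in M$ is ousted from $M$ in $I$ if the list of $h$ in $I$ contains at least $q_h$ residents of $\mathrm{res}_h M$ and either $r$ is not on it or $r$ is preceded on it by at least $q_h$ residents of $\mathrm{res}_h M$. $I$-feasible sequences: the empty sequence is $I$-feasible; if $\sigma$ is $I$-feasible then $\sigma+(r,h)^+$ is $I$-feasible if $r\notin\mathrm{res}\,\mathrm{tent}(\sigma)$, $(r,h)\notin\mathrm{prop}(\sigma)$, $h$ is on the list of $r$ in $I$ and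 $(r,h')\in\mathrm{rej}(\sigma)$ for every $h'$ preceding $h$ on it; and $\sigma+(r,h)^-$ is $I$-feasible if $(r,h)$ is ousted from $\mathrm{prop}(\sigma)$ in $I$ and $(r,h)\notin\mathrm{rej}(\sigma)$. All maximal $I$-feasible sequences contain the same events; $\mathrm{prop}(I),\mathrm{tent}(I)$ denote $\mathrm{prop}(\sigma),\mathrm{tent}(\sigma)$ for any maximal $I$-feasible $\sigma$. $I$ is resident-minimal if $\mathrm{prop}(I)$ equals the set of matches $(r,h)$ with $h$ on the list of $r$ in $I$. For a resident-minimal and hospital-complete instance $I$, a prescription for $I$ is a pair $(P,X)$ of sets of matches such that: (P1) $P\cap\mathrm{prop}(I)=\emptyset$; (P2) for each $r\in R$ there is at most one $h$ with $(r,h)\in P$; (P3) $X\subseteq\mathrm{tent}(I)$; (P4) $\mathrm{res}\,P\cap\mathrm{res}\,\mathrm{tent}(I)\subseteq\mathrm{res}\,X$; (P5) for each $h\in H$, $|\mathrm{res}_h(P\cup(\mathrm{tent}(I)\setminus X))|\le q_h$, with equality if $\mathrm{res}_h X\neq\emptyset$; (P6) for each $h\in H$, every member of $\mathrm{res}_h(P\cup(\mathrm{tent}(I)\setminus X))$ precedes all members of $\mathrm{res}_h X$ in the list of $h$ in $I$. Its target set is $\mathrm{tgs}(P,X)=\{(r,h)\in X: r\notin\mathrm{res}\,P\}$. *)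

(* Defs.v *)
From mathcomp Require Import all_boot.
Set Implicit Arguments. Unset Strict Implicit. Unset Printing Implicit Defensive.

Section HR.
Variables (R H : finType).

Record instance := Instance {
  quota : H -> nat;
  rlist : R -> seq H;
  hlist : H -> seq R }.

Definition valid_instance (I : instance) : Prop :=
  (forall h, 0 < quota I h) /\ (forall r, uniq (rlist I r)) /\
  (forall h, uniq (hlist I h)).

Definition hospital_complete (I : instance) : Prop :=
  forall h r, r \in hlist I h.

Definition match_t := (R * H)%type.

Definition res_h (h : H) (M : {set match_t}) : {set R} := [set r | (r, h) \in M].
Definition res (M : {set match_t}) : {set R} := [set r | [exists h, (r, h) \in M]].

(* Events: (true, m) is the proposal m^+, (false, m) is the rejection m^-. *)
Definition event := (bool * match_t)%type.
Definition prop_ev (r : R) (h : H) : event := (true, (r, h)).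
Definition rej_ev (r : R) (h : H) : event := (false, (r, h)).

Definition propS (s : seq event) : {set match_t} := [set m | (true, m) \in s].
Definition rejS (s : seq event) : {set match_t} := [set m | (false, m) \in s].
Definition tentS (s : seq event) : {set match_t} := propS s :\: rejS s.

Definition ousted (I : instance) (M : {set match_t}) (r : R) (h : H) : bool :=
  (quota I h <= #|[set r' in res_h h M | r' \in hlist I h]|) &&
  ((r \notin hlist I h) ||
   (quota I h <= #|[set r' in res_h h M |
                    (r' \in hlist I h) && (index r' (hlist I h) < index r (hlist I h))]|)).

Definition prop_ok (I : instance) (s : seq event) (r : R) (h : H) : Prop :=
  [/\ r \notin res (tentS s), (r, h) \notin propS s, h \in rlist I r &
      forall h', h' \in rlist I r -> index h' (rlist I r) < index h (rlist I r) ->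
                 (r, h') \in rejS s].

Definition rej_ok (I : instance) (s : seq event) (r : R) (h : H) : Prop :=
  ousted I (propS s) r h /\ (r, h) \notin rejS s.

Inductive feasible (I : instance) : seq event -> Prop :=
  | feas_nil : feasible I [::]
  | feas_prop s r h : feasible I s -> prop_ok I s r h -> feasible I (rcons s (prop_ev r h))
  | feas_rej s r h : feasible I s -> rej_ok I s r h -> feasible I (rcons s (rej_ev r h)).

Definition maximal_feasible (I : instance) (s : seq event) : Prop :=
  feasible I s /\ forall e, ~ feasible I (rcons s e).

(* resident-minimal, expressed via a maximal feasible sequence sigma
   (prop(I) = prop(sigma) for any maximal sigma). *)
Definition resident_minimal_wrt (I : instance) (sigma : seq event) : Prop :=
  propS sigma = [set m : match_t | m.2 \in rlist I m.1].

(* Prescription (P,X) for I, where propI = prop(I), tentI = tent(I). *)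
Definition prescription (I : instance) (propI tentI : {set match_t})
    (P X : {set match_t}) : Prop :=
  (* P1 - P4 *)
  [/\ P :&: propI = set0,
      (forall r h h', (r, h) \in P -> (r, h') \in P -> h = h'),
      X \subset tentI &
      res P :&: res tentI \subset res X] /\
  [/\ (forall h, #|res_h h (P :|: (tentI :\: X))| <= quota I h /\
                 (res_h h X != set0 -> #|res_h h (P :|: (tentI :\: X))| = quota I h)) (* P5 *)
    & (forall h r r', r \in res_h h (P :|: (tentI :\: X)) -> r' \in res_h h X ->
          (r \in hlist I h) && (index r (hlist I h) < index r' (hlist I h)))]. (* P6 *)

Definition tgs (P X : {set match_t}) : {set match_t} :=
  [set m in X | m.1 \notin res P].

End HR.

(* Main.v *)
Require Import Defs.
From mathcomp Require Import all_boot.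
From mathcomp Require Import zify.

Section Aux.
Variables (R H : finType).

Lemma in_res_h (h : H) (M : {set match_t R H}) r : (r \in res_h h M) = ((r, h) \in M).
Proof. by rewrite /res_h inE. Qed.

Lemma tent_quota (I : instance R H) sigma h :
  hospital_complete I -> maximal_feasible I sigma ->
  #|res_h h (tentS sigma)| <= quota I h.
Proof.
move=> hc [feas maxf]; rewrite leqNgt; apply/negP => big.
set Th := res_h h (tentS sigma) in big.
have [r0 r0T] : exists r0, r0 \in Th.
  by apply/set0Pn; rewrite -card_gt0; apply: leq_ltn_trans big.
case: (@arg_maxnP _ r0 (mem Th) (fun r => index r (hlist I h)) r0T) => r rT0 rmax; have rT : r \in Th := rT0.
apply: (maxf (rej_ev r h)); apply: feas_rej => //; split; last first.
  by move: rT; rewrite /Th /res_h /tentS !inE => /andP [].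
have ThP : forall r', r' \in Th -> (true, (r', h)) \in sigma.
  by move=> r'; rewrite /Th /res_h /tentS !inE => /andP [].
apply/andP; split.
  apply: leq_trans (ltnW big) _; apply: subset_leq_card; apply/subsetP => r' r'T.
  by rewrite !inE ThP // hc.
apply/orP; right.
have : #|Th| <= #|Th :\ r|.+1 by rewrite (cardsD1 r Th) rT.
move=> c; have {}c : quota I h <= #|Th :\ r| by lia.
apply: leq_trans c _; apply: subset_leq_card; apply/subsetP => r'.
rewrite in_setD1 => /andP [nr r'T]; rewrite !inE ThP ?hc //=.
rewrite ltn_neqAle; have -> : index r' (hlist I h) <= index r (hlist I h) := rmax r' r'T; rewrite andbT; apply/negP => /eqP e.
move/eqP: nr; apply.
by rewrite -(nth_index r (hc h r')) e nth_index // hc.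
Qed.

Lemma card_split (M : {set match_t R H}) : #|M| = \sum_h #|res_h h M|.
Proof.
rewrite -sum1_card (partition_big (fun m : match_t R H => m.2) predT) //=.
apply: eq_bigr => h _.
have -> : #|res_h h M| = #|(fun r => (r, h)) @: res_h h M|.
  by rewrite card_imset // => a b [].
rewrite sum1_card; apply: eq_card => m; change (((m \in M) && (m.2 == h)) = (m \in (fun r => (r, h)) @: res_h h M)).
case: m => a b /=; apply/andP/imsetP.
  by case=> ab /eqP <-; exists a; rewrite ?in_res_h.
by case=> c; rewrite in_res_h => cM [-> ->]; split.
Qed.

End Aux.

Theorem proposition7 (R H : finType) (I : instance R H) (sigma : seq (event R H))
    (P X : {set match_t R H}) :
  valid_instance I ->
  hospital_complete I ->
  maximal_feasible I sigma ->
  resident_minimal_wrt I sigma ->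
  prescription I (propS sigma) (tentS sigma) P X ->
  #|tgs P X| <= #|res P :\: res (tentS sigma)|.
Proof.
move=> _ hc mf _ [[P1 P2 P3 P4] [P5 P6]].
set T := tentS sigma in P3 P4 P5 P6 *.
have perh : forall h, #|res_h h X| <= #|res_h h P|.
  move=> h; have tq := @tent_quota _ _ I sigma h hc mf.
  have [X0|Xn0] := eqVneq (res_h h X) set0; first by rewrite X0 cards0.
  have [_ /(_ Xn0) eq] := P5 h.
  have sub : res_h h (P :|: (T :\: X)) \subset res_h h P :|: (res_h h T :\: res_h h X).
    apply/subsetP => r; rewrite !inE => /orP [->//|/andP [a b]].
    by rewrite a b orbT.
  have c1 := subset_leq_card sub.
  have c2 := leq_of_leqif (leq_card_setU (res_h h P) (res_h h T :\: res_h h X)).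
  have XT : res_h h X \subset res_h h T.
    by apply/subsetP => r; rewrite !in_res_h; apply: (subsetP P3).
  have c3 := cardsD (res_h h T) (res_h h X).
  have c5 := subset_leq_card XT.
  move/setIidPr: XT => XT. rewrite XT in c3.
  rewrite -/T in tq.
  lia.
have XP : #|X| <= #|P|.
  by rewrite (@card_split _ _ X) (@card_split _ _ P); apply: leq_sum => h _.
have resP : #|res P| = #|P|.
  have -> : res P = (fun m : match_t R H => m.1) @: P.
    apply/setP => r; rewrite inE; apply/existsP/imsetP.
      by case=> h rh; exists (r, h).
    by case=> [[a b]] ab /= ->; exists b.
  rewrite card_in_imset // => [[a b] [c d]] ab cd /= e.
  by move: e ab cd => -> ab cd; rewrite (P2 _ _ _ ab cd).
set Y := [set m in X | m.1 \in res P].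
have tY : #|tgs P X| + #|Y| = #|X|.
  rewrite -(cardsID [set m | m.1 \in res P] X) addnC; congr (_ + _); apply: eq_card => m;
  by rewrite !inE andbC.
have AB : #|res P :&: res T| <= #|Y|.
  apply: leq_trans (leq_imset_card (fun m : match_t R H => m.1) Y).
  apply: subset_leq_card; apply/subsetP => r rAB.
  have := subsetP P4 r rAB; rewrite inE => /existsP [h rh].
  apply/imsetP; exists (r, h) => //; rewrite inE rh /=.
  by move: rAB; rewrite inE => /andP [].
have := cardsD (res P) (res T).
have := subset_leq_card (subsetIl (res P) (res T)).
move: tY XP resP AB; clear.
move: #|tgs P X| #|Y| #|X| #|P| #|res P| #|res P :&: res T| #|res P :\: res T|.
move=> a b c d e f g; lia.
Qed.
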